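(* Let $V$ be a vertex algebra over $\mathbb{F}$ and let $W$ be a $(V,\mathcal{B})$-module. Set $W^{\mathcal{D}}=\{w\in W\mid \mathcal{D}^{(n)}w=0\text{ for all } n\ge1\}$. If $f:V\to W$ is a $V$-module homomorphism, then $f$ is a $(V,\mathcal{B})$-module homomorphism (i.e. also a $\mathcal{B}$-module homomorphism) if and only if $f(\mathbf{1})\in W^{\mathcal{D}}$. Furthermore, the map $\phi:\mathrm{Hom}_{(V,\mathcal{B})}(V,W)\to W^{\mathcal{D}}$, $\phi(f)=f(\mathbf{1})$, is a linear isomorphism.
   Context: $\mathbb{F}$ is an algebraically closed field of odd prime characteristic $p$; vertex algebras and their modules over $\mathbb{F}$ are defined by the usual axioms with the Jacobi identity. $\mathcal{B}$ is the bialgebra with basis $\{\mathcal{D}^{(n)}\mid n\in\mathbb{N}\}$, $\mathcal{D}^{(0)}=1$, $\mathcal{D}^{(m)}\mathcal{D}^{(n)}=\binom{m+n}{n}\mathcal{D}^{(m+n)}$, $\Delta(\mathcal{D}^{(n)})=\sum_{i=0}^n\mathcal{D}^{(n-i)}\otimes\mathcal{D}^{(i)}$, $\varepsilon(\mathcal{D}^{(n)})=\delta_{n,0}$; write $e^{x\mathcal{D}}=\sum_{n\ge0}x^n\mathcal{D}^{(n)}$. Every vertex algebra $V$ is a $\mathcal{B}$-module via $\mathcal{D}^{(n)}v=v_{-n-1}\mathbf{1}$. A $(V,\mathcal{B})$-module is a $V$-module $(W,Y_W)$ that is also a $\mathcal{B}$-module with $e^{x\mathcal{D}}Y_W(v,z)e^{-x\mathcal{D}}=Y_W(e^{x\mathcal{D}}v,z)$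 for all $v\in V$. $\mathrm{Hom}_{(V,\mathcal{B})}(V,W)$ is the space of maps that are both $V$-module and $\mathcal{B}$-module homomorphisms. *)

(* Defs.v *)
From HB Require Import structures.
From mathcomp Require Import all_boot all_order all_algebra.
Set Implicit Arguments. Unset Strict Implicit. Unset Printing Implicit Defensive.
Import Order.TTheory GRing.Theory Num.Theory.
Local Open Scope ring_scope.

(* Generalized binomial coefficient binom(l, i) for l : int, i : nat, as an integer:
   binom(n, i) = 'C(n, i) for n >= 0 and binom(-(n+1), i) = (-1)^i 'C(n+i, i). *)
Definition binz (l : int) (i : nat) : int :=
  match l with
  | Posz n => ('C(n, i))%:Z
  | Negz n => (-1) ^+ i * ('C(n + i, i))%:Z
  end.

Section VA.
Variable F : fieldType.

(* A vertex algebra structure on the F-vector space V, given by the modes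
   Y u n v = u_n v (Y(u,z) = sum_n u_n z^{-n-1}) and the vacuum one. *)
Definition is_vertex_algebra (V : lmodType F) (Y : V -> int -> V -> V) (one : V) : Prop :=
  [/\
      (forall a u1 u2 n v, Y (a *: u1 + u2) n v = a *: Y u1 n v + Y u2 n v),
      (forall a u n v1 v2, Y u n (a *: v1 + v2) = a *: Y u n v1 + Y u n v2),
      (* truncation: Y(u,z)v in V((z)) *)
      (forall u v, exists N : int, forall n : int, N <= n -> Y u n v = 0),
      (* Y(1,z) = id *)
      (forall n v, Y one n v = (if n == (-1)%R then v else 0)) /\
      (* creation: Y(v,z)1 in V[[z]] and its constant term is v *)
      ((forall v (n : int), 0 <= n -> Y v n one = 0) /\ (forall v, Y v (-1) one = v)) &
      (* Jacobi identity, in components (Borcherds identity); the infinite sums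
         over i are finite by truncation, and we ask equality of all long enough
         partial sums *)
      (forall (u v w : V) (l m n : int), exists K : nat, forall N : nat, (K <= N)%N ->
         \sum_(i < N) (binz m i)%:~R *: Y (Y u (l + i%:Z) v) (m + n - i%:Z) w =
         \sum_(i < N) ((-1) ^+ i * (binz l i)%:~R) *:
            (Y u (l + m - i%:Z) (Y v (n + i%:Z) w)
             - ((-1) ^+ `|l|%N) *: Y v (l + n - i%:Z) (Y u (m + i%:Z) w)))].

Definition is_va_module (V W : lmodType F) (Y : V -> int -> V -> V) (one : V)
    (YW : V -> int -> W -> W) : Prop :=
  [/\ (forall a u1 u2 n w, YW (a *: u1 + u2) n w = a *: YW u1 n w + YW u2 n w),
      (forall a u n w1 w2, YW u n (a *: w1 + w2) = a *: YW u n w1 + YW u n w2),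
      (forall u w, exists N : int, forall n : int, N <= n -> YW u n w = 0),
      (forall n w, YW one n w = (if n == (-1)%R then w else 0)) &
      (forall (u v : V) (w : W) (l m n : int), exists K : nat, forall N : nat, (K <= N)%N ->
         \sum_(i < N) (binz m i)%:~R *: YW (Y u (l + i%:Z) v) (m + n - i%:Z) w =
         \sum_(i < N) ((-1) ^+ i * (binz l i)%:~R) *:
            (YW u (l + m - i%:Z) (YW v (n + i%:Z) w)
             - ((-1) ^+ `|l|%N) *: YW v (l + n - i%:Z) (YW u (m + i%:Z) w)))].

(* The B-action on V: D^(n) v = v_{-n-1} 1. *)
Definition DV (V : lmodType F) (Y : V -> int -> V -> V) (one : V) (n : nat) (v : V) : V :=
  Y v (- (n%:Z) - 1) one.

(* D n is the action of D^(n) on W: a B-module structure on W. *)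
Definition is_B_module (W : lmodType F) (D : nat -> W -> W) : Prop :=
  [/\ (forall n a w1 w2, D n (a *: w1 + w2) = a *: D n w1 + D n w2),
      (forall w, D 0%N w = w) &
      (forall m n w, D m (D n w) = ('C(m + n, n))%:R *: D (m + n)%N w)].

(* (V,B)-module: V-module that is a B-module with
   e^{xD} Y_W(v,z) e^{-xD} = Y_W(e^{xD} v, z), written coefficientwise in x^k z^{-m-1}. *)
Definition is_VB_module (V W : lmodType F) (Y : V -> int -> V -> V) (one : V)
    (YW : V -> int -> W -> W) (D : nat -> W -> W) : Prop :=
  [/\ is_va_module Y one YW, is_B_module D &
      (forall (v : V) (k : nat) (m : int) (w : W),
         \sum_(i < k.+1) ((-1) ^+ (k - i)) *: D i (YW v m (D (k - i)%N w))
         = YW (DV Y one k v) m w)].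

Definition is_V_hom (V W : lmodType F) (Y : V -> int -> V -> V)
    (YW : V -> int -> W -> W) (f : V -> W) : Prop :=
  (forall a v1 v2, f (a *: v1 + v2) = a *: f v1 + f v2) /\
  (forall u n v, f (Y u n v) = YW u n (f v)).

Definition is_B_hom (V W : lmodType F) (Y : V -> int -> V -> V) (one : V)
    (D : nat -> W -> W) (f : V -> W) : Prop :=
  forall n v, f (DV Y one n v) = D n (f v).

Definition is_VB_hom (V W : lmodType F) (Y : V -> int -> V -> V) (one : V)
    (YW : V -> int -> W -> W) (D : nat -> W -> W) (f : V -> W) : Prop :=
  is_V_hom Y YW f /\ is_B_hom Y one D f.

Definition in_WD (W : lmodType F) (D : nat -> W -> W) (w : W) : Prop :=
  forall n : nat, (0 < n)%N -> D n w = 0.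

End VA.

(* Main.v *)
Require Import Defs.
From HB Require Import structures.
From mathcomp Require Import all_boot all_order all_algebra.
From mathcomp Require Import zify.
From Stdlib Require Import FunctionalExtensionality.
Set Implicit Arguments. Unset Strict Implicit.
Import Order.TTheory GRing.Theory Num.Theory.
Local Open Scope ring_scope.

Lemma sum_pick (M : nmodType) N j (hj : (j < N)%N) (G : 'I_N -> M) :
  (forall i : 'I_N, (i : nat) != j -> G i = 0) -> \sum_(i < N) G i = G (Ordinal hj).
Proof.
move=> hG; rewrite (bigD1 (Ordinal hj)) //= big1 ?addr0 // => i hi; apply: hG.
Qed.

Lemma binz0 l : binz l 0 = 1.
Proof. by case: l => n /=; rewrite ?addn0 bin0 ?mul1r. Qed.

Lemma binF (F : fieldType) p e n : p \in [pchar F] -> (n < p ^ e)%N ->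
  ('C(n + p ^ e, n))%:R != 0 :> F.
Proof.
move=> hp hn.
have frob : forall e, ('X + 1 : {poly F}) ^+ (p ^ e) = 'X^(p^e) + 1.
  elim=> [|e' IH]; first by rewrite expn0 !expr1.
  rewrite expnSr exprM IH exprDn_pchar ?expr1n -?exprM //.
  by rewrite pnatE ?(pcharf_prime hp) // pchar_poly.
have coefP : forall m, (('X + 1 : {poly F}) ^+ m)`_n = ('C(m, n))%:R.
  move=> m; rewrite exprD1n coef_sum.
  rewrite (eq_bigr (fun i : 'I_m.+1 => if (i == n :> nat) then ('C(m,n))%:R else 0)); last first.
    move=> i _; rewrite coefMn coefXn; case: (eqVneq (i:nat) n) => [->|h]; first by rewrite /= mulr1n.
    by rewrite /= mulr0n mul0rn.
  rewrite -big_mkcond (big_ord1_eq _ (fun _ => ('C(m,n))%:R)); case: ltnP => // h.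
  by rewrite bin_small.
rewrite -coefP exprD frob mulrDr mulr1 coefD coefMXn hn add0r coefP binn.
exact: oner_neq0.
Qed.

Section Main.
Variables (F : fieldType) (V W : lmodType F) (Y : V -> int -> V -> V) (one : V)
  (YW : V -> int -> W -> W) (D : nat -> W -> W).
Hypothesis HV : is_vertex_algebra Y one.
Hypothesis HM : is_VB_module Y one YW D.

Lemma YW0 u n : YW u n 0 = 0.
Proof.
case: HM => [[_ H2 _ _ _] _ _]; have := H2 (-1) u n 0 0.
by rewrite scaler0 addr0 scaleN1r addNr.
Qed.

Lemma D0 n : D n 0 = 0.
Proof.
case: HM => [_ [H1 _ _] _]; have := H1 n (-1) 0 0.
by rewrite scaler0 addr0 scaleN1r addNr.
Qed.

Lemma Dsum w (hw : in_WD D w) v k m :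
  \sum_(i < k.+1) (-1) ^+ (k - i) *: D i (YW v m (D (k - i)%N w)) = D k (YW v m w).
Proof.
case: HM => [_ [_ HB0 _] _].
rewrite big_ord_recr /= subnn expr0 scale1r HB0 big1 ?add0r // => i _ /=.
by rewrite hw ?subn_gt0 // YW0 D0 scaler0.
Qed.

Lemma compat_WD w (hw : in_WD D w) v k m : D k (YW v m w) = YW (DV Y one k v) m w.
Proof. by case: HM => [_ _ Hc]; rewrite -Hc Dsum. Qed.

Lemma vac_step w (hw : in_WD D w) v (n q : nat) :
  ('C(q + n, n))%:R != 0 :> F -> YW v (n + q)%N w = 0 -> YW v n w = 0.
Proof.
move=> hC hm.
have HM' := HM; case: HM' => [[HW1 HW2 HWt HWv HWB] _ _].
have h1 := compat_WD hw v q (n + q)%N; rewrite hm D0 in h1.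
have [K hK] := HWB v one w (Negz q) 0 (n + q)%N.
have := hK (K + (n + q)).+1 (leq_trans (leq_addr (n + q) K) (leqnSn _)).
rewrite (@sum_pick _ _ 0%N (ltn0Sn _)) /=; last first.
  by move=> i hi; rewrite /= bin0n (negPf hi) /= scale0r.
have hnN : (n < (K + (n + q)).+1)%N by lia.
rewrite (@sum_pick _ _ n hnN) /=; last first.
  move=> i hi; rewrite !HWv.
  case: eqP => h; first by lia.
  case: eqP => h'; first by rewrite NegzE in h'; lia.
  by rewrite !YW0 scaler0 subr0 scaler0.
rewrite bin0 scale1r.
have -> : Negz q + (0%N)%:Z = - (q%:Z) - 1 by rewrite NegzE; lia.
have -> : (0%:Z + (n + q)%N%:Z - (0%N)%:Z) = (n + q)%N%:Z by lia.
rewrite -/(DV Y one q v) -h1 !HWv.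
case: eqP => h; first by lia.
case: eqP => h'; last by rewrite NegzE in h'; lia.
rewrite YW0 add0r.
have -> : (0%:Z + n%:Z) = n%:Z by lia.
move/esym/eqP; rewrite scaler_eq0 => /orP [|].
  rewrite mulf_eq0 signr_eq0 /= intrM intr_sign mulf_eq0 signr_eq0 /= => hh.
  by case/negP: hC.
by rewrite oppr_eq0 scaler_eq0 signr_eq0 => /eqP.
Qed.

Lemma vaclike p (hp : p \in [pchar F]) w (hw : in_WD D w) v (n : nat) : YW v n w = 0.
Proof.
have HM' := HM; case: HM' => [[HW1 HW2 HWt HWv HWB] _ _].
have [N0 hN0] := HWt v w.
have p2 : (1 < p)%N by apply: prime_gt1; apply: (pcharf_prime hp).
have eq : ((n + `|N0|)%N < p ^ (n + `|N0|))%N by apply: ltn_expl.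
have [e eE] : exists e, e = (n + `|N0|)%N by eexists.
rewrite -eE in eq.
apply: (vac_step hw (q := (p ^ e)%N)).
  by rewrite addnC; apply: binF => //; lia.
by apply: hN0; lia.
Qed.

Lemma f0 (f : V -> W) : (forall a v1 v2, f (a *: v1 + v2) = a *: f v1 + f v2) -> f 0 = 0.
Proof. by move=> hf; have := hf (-1) 0 0; rewrite scaler0 addr0 scaleN1r addNr. Qed.

Lemma f_one f : is_V_hom Y YW f -> forall v, f v = YW v (-1) (f one).
Proof. case: HV => [_ _ _ [_ [_ Hc]] _]; move=> [_ hf] v. by rewrite -{1}(Hc v) hf. Qed.

Lemma fw_hom p (hp : p \in [pchar F]) w (hw : in_WD D w) :
  is_VB_hom Y one YW D (fun v => YW v (-1) w).
Proof.
have HM' := HM; case: HM' => [[HW1 HW2 HWt HWv HWB] _ _].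
split; [split|].
- by move=> a v1 v2; apply: HW1.
- move=> u n v.
  have [K hK] := HWB u v w n 0 (-1).
  have := hK K.+1 (leqnSn K).
  rewrite (@sum_pick _ _ 0%N (ltn0Sn _)) /=; last first.
    by move=> i hi; rewrite /= bin0n (negPf hi) /= scale0r.
  rewrite (@sum_pick _ _ 0%N (ltn0Sn _)) /=; last first.
    move=> i hi; have -> : (0 + i%:Z) = i%:Z by lia.
    have -> : (-1 + i%:Z) = (i.-1)%:Z by lia.
    by rewrite !(vaclike hp hw) !YW0 scaler0 subr0 scaler0.
  rewrite bin0 scale1r binz0 expr0 mul1r scale1r !addr0 !add0r.
  by rewrite (vaclike hp hw u 0) YW0 scaler0 subr0.
- by move=> n v /=; rewrite compat_WD.
Qed.

End Main.

Theorem lemma2p6 (p : nat) (F : closedFieldType) (V W : lmodType F)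
    (Y : V -> int -> V -> V) (one : V) (YW : V -> int -> W -> W) (D : nat -> W -> W) :
  prime p -> odd p -> p \in [pchar F] ->
  is_vertex_algebra Y one -> is_VB_module Y one YW D ->
  (* a V-module hom is a (V,B)-module hom iff f(1) lies in W^D *)
  (forall f : V -> W, is_V_hom Y YW f -> (is_B_hom Y one D f <-> in_WD D (f one))) /\
  (* phi : Hom_{(V,B)}(V,W) -> W^D, f |-> f(1), is well defined and linear *)
  (forall f : V -> W, is_VB_hom Y one YW D f -> in_WD D (f one)) /\
  (forall (a : F) (f g : V -> W), is_VB_hom Y one YW D f -> is_VB_hom Y one YW D g ->
     is_VB_hom Y one YW D (fun v => a *: f v + g v)) /\
  (* phi is injective *)
  (forall f g : V -> W, is_VB_hom Y one YW D f -> is_VB_hom Y one YW D g ->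
     f one = g one -> f = g) /\
  (* phi is surjective *)
  (forall w : W, in_WD D w -> exists f : V -> W, is_VB_hom Y one YW D f /\ f one = w).
Proof.
move=> hpr hodd hp HV HM.
have HM' := HM; case: HM' => [[HW1 HW2 HWt HWv HWB] [HB1 HB0 HBm] Hc].
have HV' := HV; case: HV' => [HY1 HY2 HYt [HYv [HYc HYcr]] HYB].
have part1 : forall f, is_V_hom Y YW f -> (is_B_hom Y one D f <-> in_WD D (f one)).
  move=> f hf; split.
  - move=> hB n hn; rewrite -hB /DV HYv.
    case: eqP => h; first by lia.
    exact: f0 (proj1 hf).
  - move=> hw n v.
    by rewrite (f_one HV hf (DV Y one n v)) (f_one HV hf v) (compat_WD HM hw).
split; first exact: part1.
split; first by move=> f [hV hB]; apply/(part1 f hV).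
split.
  move=> a f g [[hfl hfY] hfB] [[hgl hgY] hgB]; split; [split|].
  - move=> b v1 v2; rewrite hfl hgl !scalerDr !scalerA mulrC.
    by rewrite addrACA.
  - by move=> u n v; rewrite hfY hgY HW2.
  - by move=> n v; rewrite hfB hgB HB1.
split.
  move=> f g [hf _] [hg _] e; apply: functional_extensionality => v.
  by rewrite (f_one HV hf) (f_one HV hg) e.
move=> w hw; exists (fun v => YW v (-1) w); split; first exact: (fw_hom HM hp hw).
by rewrite HWv eqxx.
Qed.
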